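(* Let $c\in[\frac12,1)$ and let $d,\delta$ be positive integers with $d\ge\delta$. Let $G$ be a graph with maximum degree $\delta$ and $w:V(G)\to[0,1]$ a weight function with $w(V(G))=1$, and assume $G$ has no $d$-bounded $(w,c)$-balanced separator. Fix a bijection $\mathcal{O}:V(G)\to\{1,\dots,|V(G)|\}$. Let $x,y\in V(G)$ be non-adjacent and incomparable with respect to $\le_A$. Then $S_x$ and $S_y$ are loosely non-crossing, i.e. $A_x\cap C_y=\emptyset$ and $A_y\cap C_x=\emptyset$.
   Context: For $X\subseteq V(G)$, $w(X)=\sum_{x\in X}w(x)$; $N[v]=N(v)\cup\{v\}$; $N^d[v]$ is the set of vertices at distance at most $d$ from $v$. A set $X$ is $d$-bounded if $X\subseteq N^d[v]$ for some $v$. $X$ is a $(w,c)$-balanced separator if every connected component $D$ of $G\setminus X$ has $w(D)\le c$. For $v\in V(G)$, the canonical star separation $S_v=(A_v,C_v,B_v)$ is: $B_v$ the (under these assumptions unique) largest-weight connected component of $G\setminus N[v]$, $C_v$ the set consisting of $v$ and every vertex of $N(v)$ with a neighbor in $B_v$, and $A_v=V(G)\setminus(B_v\cup C_v)$. Two vertices $u,v$ are star twins if $B_u=B_v$, $C_u\setminus\{u\}=C_v\setminus\{v\}$ and $A_u\setminus\{v\}=A_v\setminus\{u\}$. The relation $\le_A$ is defined by: $x\le_A y$ if $x=y$, or $x,y$ are star twins and $\mathcal{O}(x)<\mathcal{O}(y)$, or $x,y$ are not star twins and $y\in A_x$. *)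

(* Defs.v *)
From HB Require Import structures.
From mathcomp Require Import all_boot all_order all_algebra.
Set Implicit Arguments. Unset Strict Implicit. Unset Printing Implicit Defensive.
Import Order.TTheory GRing.Theory Num.Theory.
Local Open Scope ring_scope.

(* A finite simple graph: vertex type T : finType, adjacency e : rel T,
   assumed symmetric and irreflexive in the theorem. *)
Section StarSep.
Variables (T : finType) (e : rel T).

Definition nbhd (v : T) : {set T} := [set u | e v u].
Definition cnbhd (v : T) : {set T} := v |: nbhd v.
Definition degree (v : T) : nat := #|nbhd v|.

Fixpoint ball (k : nat) (v : T) : {set T} :=
  match k with
  | 0 => [set v]
  | k'.+1 => ball k' v :|: [set u | [exists x in ball k' v, e x u]]
  end.

Definition bounded (d : nat) (X : {set T}) : Prop := exists v, X \subset ball d v.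

Definition del_rel (X : {set T}) : rel T :=
  [rel a b | [&& e a b, a \notin X & b \notin X]].

(* the connected component of G \ X containing u (for u \notin X) *)
Definition comp (X : {set T}) (u : T) : {set T} :=
  [set v | connect (del_rel X) u v].

Definition comps (X : {set T}) : {set {set T}} :=
  [set D | [exists u, (u \notin X) && (D == comp X u)]].

Variables (R : realFieldType) (w : T -> R).

Definition wt (X : {set T}) : R := \sum_(x in X) w x.

Definition balanced_sep (c : R) (X : {set T}) : Prop :=
  forall D, D \in comps X -> wt D <= c.

(* B_v : a largest-weight component of G \ N[v] (unique under the assumptions) *)
Definition Bv (v : T) : {set T} :=
  odflt set0 [pick D | (D \in comps (cnbhd v)) &&
                       [forall D', (D' \in comps (cnbhd v)) ==> (wt D' <= wt D)]].

Definition Cv (v : T) : {set T} :=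
  v |: [set u in nbhd v | [exists b in Bv v, e u b]].

Definition Av (v : T) : {set T} := ~: (Bv v :|: Cv v).

Definition star_twins (u v : T) : bool :=
  [&& Bv u == Bv v, Cv u :\ u == Cv v :\ v & Av u :\ v == Av v :\ u].

Variable O : T -> nat.

Definition leA (x y : T) : bool :=
  [|| x == y, star_twins x y && (O x < O y)%N | ~~ star_twins x y && (y \in Av x)].

End StarSep.

(* Main.v *)
Require Import Defs.
From HB Require Import structures.
From mathcomp Require Import all_boot all_order all_algebra.
Import Order.TTheory GRing.Theory Num.Theory.
Local Open Scope ring_scope.
Set Implicit Arguments. Unset Strict Implicit.

Lemma conn_notin (T : finType) (e : rel T) (X : {set T}) u v :
  connect (del_rel e X) u v -> u \notin X -> v \notin X.
Proof.
case/connectP => p; elim: p u => [|a p IH] u /= => [_ -> //|].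
case/andP => /andP [_ /andP [_ aX]] pth vE _; exact: IH pth vE aX.
Qed.

Lemma Bv_closed (R : realFieldType) (T : finType) (e : rel T) (w : T -> R) (x y z : T) :
  y \in Bv e w x -> e y z -> z \notin cnbhd e x -> z \in Bv e w x.
Proof.
rewrite /Bv; case: pickP => [D /andP [Dc _] | _] /=; last by rewrite inE.
move=> yD eyz zX.
move: Dc; rewrite inE => /existsP [u /andP [uX /eqP DE]].
move: yD; rewrite DE !inE => cuy.
apply: (connect_trans cuy); apply: connect1.
by rewrite /del_rel /= eyz zX (conn_notin cuy uX).
Qed.

Lemma and3_eq_sym (U : eqType) (a b c d f g : U) :
  [&& a == b, c == d & f == g] = [&& b == a, d == c & g == f].
Proof. by rewrite (eq_sym a) (eq_sym c) (eq_sym f). Qed.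

Lemma half (R : realFieldType) (T : finType) (e : rel T) (w : T -> R) (x y : T) :
  symmetric e -> x != y -> ~~ e x y -> y \notin Av e w x ->
  Av e w x :&: Cv e w y = set0.
Proof.
move=> sym nxy nexy yA.
have yB : y \in Bv e w x.
  move: yA; rewrite /Av in_setC in_setU negbK => /orP [//|].
  by rewrite /Cv /nbhd !inE eq_sym (negbTE nxy) (negbTE nexy).
apply/setP => z; rewrite in_set0 inE; apply/negP => /andP [zA zC].
move: zC; rewrite /Cv /nbhd !inE => /orP [/eqP zy|/andP [eyz _]].
  by rewrite zy (negbTE yA) in zA.
have zX : z \notin cnbhd e x.
  rewrite /cnbhd /nbhd !inE; apply/negP => /orP [/eqP zx|exz].
    by move: nexy; rewrite sym -zx eyz.
  move: zA; rewrite /Av /Cv /nbhd !inE negb_or => /andP [_ /negP]; apply.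
  by apply/orP; right; rewrite exz; apply/existsP; exists y; rewrite yB sym.
by move: zA; rewrite /Av in_setC in_setU (Bv_closed yB eyz zX).
Qed.


Theorem lemma4p4 (R : realFieldType) (c : R) (d delta : nat)
  (T : finType) (e : rel T) (w : T -> R) (O : T -> nat) (x y : T) :
  1 / 2 <= c -> c < 1 ->
  (0 < delta)%N -> (0 < d)%N -> (delta <= d)%N ->
  symmetric e -> irreflexive e ->
  (forall v, (degree e v <= delta)%N) -> (exists v, degree e v = delta) ->
  (forall v, 0 <= w v <= 1) -> wt w [set: T] = 1 ->
  (forall X : {set T}, bounded e d X -> ~ balanced_sep e w c X) ->
  injective O -> (forall v, (1 <= O v <= #|T|)%N) ->
  ~~ e x y ->
  ~~ leA e w O x y -> ~~ leA e w O y x ->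
  Av e w x :&: Cv e w y = set0 /\ Av e w y :&: Cv e w x = set0.
Proof.
move=> _ _ _ _ _ sym _ _ _ _ _ _ injO _ nexy.
rewrite /leA => H1 H2.
have nxy : x != y by apply: contraNneq H1 => ->; rewrite eqxx.
have st1 : star_twins e w x y -> (O y < O x)%N.
  move=> st; rewrite ltnNge leq_eqVlt; apply/negP => /orP [/eqP Oe|lt].
    by move: nxy; rewrite (injO _ _ Oe) eqxx.
  by move: H1; rewrite st lt orbT.
have st2 : star_twins e w y x -> (O x < O y)%N.
  move=> st; rewrite ltnNge leq_eqVlt; apply/negP => /orP [/eqP Oe|lt].
    by move: nxy; rewrite (injO _ _ Oe) eqxx.
  by move: H2; rewrite st lt orbT.
have stE : star_twins e w x y = star_twins e w y x.
  exact: and3_eq_sym.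
have nst : ~~ star_twins e w x y.
  apply/negP => st.
  have := st1 st; have := st2 (etrans (esym stE) st).
  by move=> a b; move: (ltn_trans a b); rewrite ltnn.
have yA : y \notin Av e w x by apply: contraNN H1 => yA; rewrite nst yA !orbT.
have xA : x \notin Av e w y by apply: contraNN H2 => xA; rewrite -stE nst xA !orbT.
split; first exact: half.
have nyx : y != x by rewrite eq_sym.
have neyx : ~~ e y x by rewrite sym.
exact: (half sym nyx neyx xA).
Qed.
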